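(* Let $f_0$ be an arithmetic function and let $m\ge1$. For every $n\ge1$, \[f_m(n)=\sum_{i=1}^n m^{i-1}c_1(n,i).\]
   Context: An arithmetic function is a function $f_0:\{1,2,\ldots\}\to\mathbb{C}$. For $m\ge 1$, $f_m$ is the invert transform of $f_{m-1}$, i.e. $f_m(n)=f_{m-1}(n)+\sum_{i=1}^{n-1}f_{m-1}(i)f_m(n-i)$ for $n\ge1$. The numbers $c_1(n,k)$, $0\le k\le n$, are defined by $c_1(0,0)=1$, $c_1(n,0)=0$ for $n\ge1$, and $c_1(n,k)=\sum_{i=1}^{n-k+1}f_{0}(i)\,c_1(n-i,k-1)$ for $1\le k\le n$. *)

(* Defs.v *)
From mathcomp Require Import all_boot all_order all_algebra.
From mathcomp Require Import complex.
Set Implicit Arguments. Unset Strict Implicit. Unset Printing Implicit Defensive.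
Import GRing.Theory.
Local Open Scope ring_scope.

(* An arithmetic function {1,2,...} -> C is represented as g : nat -> C;
   the value g 0 is irrelevant and never used. *)

Section Invert.
Variable C : comNzRingType.

(* Given g = f_{m-1}, build the values of its invert transform h = f_m on
   1..n as the sequence [h 1; ...; h n], via
   h(n) = g(n) + sum_{i=1}^{n-1} g(i) h(n-i). *)
Fixpoint invert_seq (g : nat -> C) (n : nat) : seq C :=
  match n with
  | 0 => [::]
  | n'.+1 =>
      let s := invert_seq g n' in
      (* nth 0 s (k-1) = h k for 1 <= k <= n' *)
      rcons s (g n + \sum_(1 <= i < n) g i * nth 0 s (n - i).-1)
  end.

Definition invert (g : nat -> C) (n : nat) : C := nth 0 (invert_seq g n) n.-1.

Definition fm (f0 : nat -> C) (m : nat) : nat -> C := iter m invert f0.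

Fixpoint c1 (f0 : nat -> C) (n k : nat) {struct k} : C :=
  match k with
  | 0 => if n == 0%N then 1 else 0
  | k'.+1 => \sum_(1 <= i < (n - k).+2) f0 i * c1 f0 (n - i) k'
  end.
End Invert.

(* Main.v *)
Require Import Defs.
From mathcomp Require Import all_boot all_order all_algebra.
From mathcomp Require Import reals complex.
From mathcomp Require Import zify ring.
Set Implicit Arguments. Unset Strict Implicit. Unset Printing Implicit Defensive.
Import GRing.Theory.
Local Open Scope ring_scope.

Section Gen.
Variable C : fieldType.
Implicit Types g h : nat -> C.

Lemma size_invert_seq g n : size (invert_seq g n) = n.
Proof. by elim: n => //= n IH; rewrite size_rcons IH. Qed.

Lemma nth_invert_seq g n k : (0 < k <= n)%N -> nth 0 (invert_seq g n) k.-1 = invert g k.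
Proof.
elim: n => [|n IH] /andP[k0 kn]; first by case: k k0 kn.
have [->|ne] := eqVneq k n.+1; first by [].
have kn' : (k <= n)%N by lia.
rewrite /= nth_rcons size_invert_seq.
have -> : (k.-1 < n)%N by lia.
by rewrite IH // k0 kn'.
Qed.

Lemma invert_rec g n : (0 < n)%N ->
  invert g n = g n + \sum_(1 <= i < n) g i * invert g (n - i)%N.
Proof.
case: n => // n _.
rewrite {1}/invert /= nth_rcons size_invert_seq ltnn eqxx.
congr (_ + _); apply: eq_big_nat => i /andP[i1 iltn].
rewrite nth_invert_seq //; lia.
Qed.

Lemma invert_seq_ext g g' : (forall i, (0 < i)%N -> g i = g' i) ->
  forall n, invert_seq g n = invert_seq g' n.
Proof.
move=> H; elim=> //= n IH; rewrite IH H //.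
congr (rcons _ (_ + _)); apply: eq_big_nat => i /andP[i1 _]; rewrite !H //; lia.
Qed.

Lemma invert_unique g h :
  (forall n, (0 < n)%N -> h n = g n + \sum_(1 <= i < n) g i * h (n - i)%N) ->
  forall n, (0 < n)%N -> h n = invert g n.
Proof.
move=> H; elim/ltn_ind => n IH n0.
rewrite H // invert_rec //; congr (_ + _); apply: eq_big_nat => i /andP[i1 iltn].
rewrite IH //; lia.
Qed.

Lemma telescope (P c : {poly C}) k :
  (1 - c * P) * \sum_(i < k.+1) c ^+ i * P ^+ i.+1 = P - c ^+ k.+1 * P ^+ k.+2.
Proof.
elim: k => [|k IH]; first by rewrite big_ord1 expr0 expr1 mul1r; ring.
rewrite big_ord_recr /= mulrDr IH !exprS; ring.
Qed.

Variable f0 : nat -> C.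

Section Poly.
Variable N : nat.
Definition Gp : {poly C} := \poly_(i < N) f0 i.+1.
Definition Fp : {poly C} := 'X * Gp.
Definition Ap (a : C) : {poly C} := \sum_(k < N) (a%:P) ^+ k * Fp ^+ k.+1.

Lemma coefF j : (0 < j <= N)%N -> Fp`_j = f0 j.
Proof.
move=> /andP[j0 jN]; rewrite /Fp coefXM coef_poly.
case: j j0 jN => // j _ jN /=; by rewrite jN.
Qed.

Lemma coefF0 : Fp`_0 = 0.
Proof. by rewrite /Fp coefXM. Qed.

Lemma coefFk k j : (j < k)%N -> (Fp ^+ k)`_j = 0.
Proof. by move=> jk; rewrite /Fp exprMn coefXnM jk. Qed.

Lemma c1F k j : (k <= j <= N)%N -> c1 f0 j k = (Fp ^+ k)`_j.
Proof.
elim: k j => [|k IH] j /andP[kj jN].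
  by rewrite expr0 coef1 /=; case: j {kj jN}.
rewrite /= exprS coefM -(big_mkord xpredT (fun i => Fp`_i * (Fp ^+ k)`_(j - i))).
have -> : (j - k.+1).+2 = (j - k).+1 by lia.
have h1 : ((j-k).+1 <= j.+1)%N by lia.
rewrite [RHS](big_cat_nat _ (n:=1)) //= [X in _ + X](big_cat_nat _ h1) //=.
rewrite big_nat1 coefF0 mul0r add0r.
rewrite [X in _ + X]big_nat_cond [X in _ + X]big1 ?addr0.
  apply: eq_big_nat => i /andP[i1 i2]; rewrite coefF ?IH //; lia.
move=> i /andP[/andP[h2 h3] _]; rewrite coefFk ?mulr0 //; lia.
Qed.


Lemma coefA a j : (j <= N)%N ->
  (Ap a)`_j = \sum_(1 <= k < j.+1) a ^+ k.-1 * c1 f0 j k.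
Proof.
move=> jN; rewrite /Ap coef_sum.
under eq_bigr do rewrite -rmorphXn coefCM.
rewrite -(big_mkord xpredT (fun i => a ^+ i * (Fp ^+ i.+1)`_j)).
rewrite (big_cat_nat _ (n:=j)) //= big_add1.
rewrite [X in _ + X]big_nat_cond [X in _ + X]big1 ?addr0.
  apply: eq_big_nat => i /andP[i1 i2]; rewrite c1F //=; lia.
move=> i /andP[/andP[h1 h2] _]; rewrite coefFk ?mulr0 //; lia.
Qed.

Lemma UA a : (0 < N)%N -> 'X^(N.+1) %| (1 - a%:P * Fp) * Ap a - Fp.
Proof.
move=> N0; have [N' eN] : exists N', N = N'.+1 by exists N.-1; lia.
rewrite /Ap eN telescope.
have -> : Fp - (a%:P) ^+ N'.+1 * Fp ^+ N'.+2 - Fp = - ((a%:P) ^+ N'.+1 * Gp ^+ N'.+2 * 'X^(N'.+2)).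
  by rewrite /Fp exprMn; ring.
by rewrite dvdpNr dvdp_mull.
Qed.

Lemma key a j : (0 < N)%N -> (j <= N)%N ->
  (Ap (a + 1))`_j = (Ap a)`_j + (Ap a * Ap (a + 1))`_j.
Proof.
move=> N0 jN.
have hU := UA a N0; have hV := UA (a + 1) N0.
move: hU hV; set A := Ap a; set B := Ap (a + 1); set F := Fp => hU hV.
have F0 : F.[0] = 0 by rewrite /F /Fp hornerM hornerX mul0r.
set U := 1 - a%:P * F; set V := 1 - (a + 1)%:P * F.
have E : U * V * (A + A * B - B) =
   V * (U * A - F) + (U * A - F) * (V * B) + F * (V * B - F) - U * (V * B - F).
  by rewrite /U /V polyCD polyC1; ring.
have cop : coprimep 'X^(N.+1) (U * V).
  rewrite coprimep_sym; apply: coprimep_expr.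
  have := coprimep_XsubC (U * V) 0; rewrite polyC0 subr0 => ->.
  rewrite /root hornerM /U /V !hornerE /= !mulr0 !mul0r subr0 mulr1 oner_eq0 //.
have : 'X^(N.+1) %| A + A * B - B.
  rewrite -(Gauss_dvdpr _ cop) E.
  apply: dvdp_sub; last exact: dvdp_mull.
  apply: dvdp_add; last exact: dvdp_mull.
  apply: dvdp_add; [exact: dvdp_mull | exact: dvdp_mulr].
move/divpK => Eq.
have := congr1 (fun p : {poly C} => p`_j) Eq; rewrite /= coefMXn ltnS jN coefB coefD.
by move/eqP; rewrite eq_sym subr_eq0 => /eqP.
Qed.

End Poly.

Definition S (m n : nat) : C := \sum_(1 <= k < n.+1) (m%:R ^+ k.-1) * c1 f0 n k.

Lemma S0 m : S m 0 = 0.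
Proof. by rewrite /S big_geq. Qed.

Lemma S_rec m n : (0 < n)%N ->
  S m.+1 n = S m n + \sum_(1 <= i < n) S m i * S m.+1 (n - i)%N.
Proof.
move=> n0.
have SA : forall b j, (j <= n)%N ->
   \sum_(1 <= k < j.+1) b ^+ k.-1 * c1 f0 j k = (Ap n b)`_j.
  by move=> b j jn; rewrite coefA.
rewrite /S -natr1 !SA // key // coefM.
congr (_ + _).
rewrite -(big_mkord xpredT (fun i => (Ap n m%:R)`_i * (Ap n (m%:R + 1))`_(n - i))).
rewrite big_ltn // big_nat_recr //= -!SA // ?leq0n ?subnn //.
rewrite subn0 [X in X * _ + _]big_geq // mul0r add0r [X in _ * X]big_geq // mulr0 addr0.
  apply: eq_big_nat => i /andP[i1 i2].
  have h1 : (i <= n)%N by apply: ltnW.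
  have h2 : (n - i <= n)%N by apply: leq_subr.
  by rewrite (SA _ i h1) (SA _ (n - i)%N h2).
by rewrite subn0.
Qed.

Lemma S_base n : (0 < n)%N -> S 0 n = f0 n.
Proof.
move=> n0; rewrite /S big_ltn // big_nat_cond big1 ?addr0.
  by rewrite expr0 mul1r (c1F (N:=n)) ?expr1 ?coefF // n0 leqnn.
move=> i /andP[/andP[h1 _] _]; rewrite expr0n.
by case: i h1 => [|[|i]] //= _; rewrite mul0r.
Qed.

Lemma fm_S m n : (0 < n)%N -> fm f0 m n = S m n.
Proof.
elim: m n => [|m IH] n n0; first by rewrite S_base.
rewrite /fm iterS -/(fm f0 m).
have -> : invert (fm f0 m) n = invert (S m) n.
  by rewrite /invert (invert_seq_ext IH).
symmetry; apply: invert_unique => // k k0; exact: S_rec.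
Qed.

End Gen.

Theorem proposition10 (R : realType) (f0 : nat -> R[i]) (m : nat) (n : nat) :
  (1 <= m)%N -> (1 <= n)%N ->
  fm f0 m n = \sum_(1 <= i < n.+1) (m%:R ^+ i.-1) * c1 f0 n i.
Proof. by move=> _ n0; rewrite (fm_S (C:=R[i]) f0 m n0). Qed.
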